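(* Let $k$ be odd and let $G$ be a $k$-uniform $s$-cycle with $1\le s<\frac{k}{2}$. Then $\lambda(\mathcal{L})=\Delta=2$, where $\Delta$ is the maximum degree of $G$. If $s$ is even, then the only Laplacian H-eigenvalue $\lambda$ of $G$ with $\lambda>1$ is $2$.
   Context: A $k$-uniform $s$-cycle with $m$ edges has vertex set $\mathbb{Z}_n$, $n=m(k-s)$ (vertex $n+i$ identified with $i$), and edges $e_j=\{j(k-s)+1,\ldots,j(k-s)+k\}$, $j=0,\ldots,m-1$; it is assumed that $n\ge 2k-s$. The degree $d_i$ of a vertex is the number of edges containing it. A Laplacian H-eigenvalue of $G$ is a real $\lambda$ for which there exists $\mathbf{x}\in\mathbb{R}^n\setminus\{0\}$ with $\lambda x_i^{k-1}=d_ix_i^{k-1}-\sum_{e\ni i}\prod_{j\in e\setminus\{i\}}x_j$ for all $i$ (equivalently, an H-eigenvalue of the Laplacian tensor $\mathcal{L}=\mathcal{D}-\mathcal{A}$, with $\mathcal{A}$ the adjacency tensor having entries $1/(k-1)!$ on edges and $\mathcal{D}$ the diagonal degree tensor); $\lambda(\mathcal{L})$ is the largest Laplacian H-eigenvalue. *)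

(* Defs.v *)
From HB Require Import structures.
From mathcomp Require Import all_boot all_order all_algebra.
From mathcomp Require Import reals.
Unset Printing Implicit Defensive.
Import Order.TTheory GRing.Theory Num.Theory.
Local Open Scope ring_scope.

(* The k-uniform s-cycle with m edges: vertex set Z_n, n = m(k-s), realised as
   'I_n (vertex t is represented by t %% n, so vertex n+i = i). *)
Definition scyc_n (k s m : nat) : nat := (m * (k - s))%N.

Definition scyc_edge (k s m : nat) (j : 'I_m) : {set 'I_(scyc_n k s m)} :=
  [set v : 'I_(scyc_n k s m) |
     [exists t : 'I_k, val v == ((j * (k - s) + t.+1) %% scyc_n k s m)%N]].

Definition scyc_deg (k s m : nat) (i : 'I_(scyc_n k s m)) : nat :=
  #|[set j : 'I_m | i \in scyc_edge k s m j]|.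

Definition scyc_maxdeg (k s m : nat) : nat :=
  (\max_(i : 'I_(scyc_n k s m)) scyc_deg k s m i)%N.

Definition is_lap_H_eigenvalue (R : realType) (k s m : nat) (lambda : R) : Prop :=
  exists x : 'I_(scyc_n k s m) -> R,
    (exists i, x i != 0) /\
    forall i : 'I_(scyc_n k s m),
      lambda * x i ^+ (k - 1) =
        (scyc_deg k s m i)%:R * x i ^+ (k - 1)
        - \sum_(j : 'I_m | i \in scyc_edge k s m j)
            \prod_(v in scyc_edge k s m j :\ i) x v.

(* Main.v *)
Require Import Defs.
From HB Require Import structures.
From mathcomp Require Import all_boot all_order all_algebra.
From mathcomp Require Import reals.
From mathcomp Require Import lra ring zify.
Set Implicit Arguments.
Unset Strict Implicit.
Unset Printing Implicit Defensive.
Import Order.TTheory GRing.Theory Num.Theory.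

Lemma arith1 q r j t p s m : (s < p -> q < m -> j < m -> r < p -> t < p + s ->
  q * p + r = j * p + t -> j = q \/ (r < s /\ 0 < q /\ j = q - 1))%N.
Proof.
move=> sp qm jm rp tp e.
case: (ltngtP j q) => h.
- right.
  have h2 : (q <= j.+1)%N.
    rewrite leqNgt; apply/negP => h3.
    have : (j.+2 * p <= q * p)%N by rewrite leq_mul2r h3 orbT.
    rewrite !mulSn; lia.
  have hq : q = j.+1 by lia. subst q.
  rewrite mulSn in e; lia.
- have h1 : (q.+1 * p <= j * p)%N by rewrite leq_mul2r h orbT.
  rewrite mulSn in h1. lia.
- by left.
Qed.
Lemma arith2 q r j t p s m : (s < p -> q < m -> j < m -> r < p -> t < p + s ->
  q * p + r + m * p = j * p + t -> q = 0 /\ r < s /\ j = m - 1)%N.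
Proof.
move=> sp qm jm rp tp e.
have hj : (j.+1 * p <= m * p)%N by rewrite leq_mul2r jm orbT.
rewrite mulSn in hj.
have hq : q = 0%N.
  case: q e qm => // q' e _. rewrite mulSn in e. lia.
subst q.
have h2 : (m <= j.+2)%N.
  rewrite leqNgt; apply/negP => h3.
  have : (j.+2 * p <= m * p)%N by rewrite leq_mul2r (ltnW h3) orbT.
  rewrite !mulSn; lia.
have hm : m = j.+1 \/ m = j.+2 by lia.
case: hm => hm; subst m.
  rewrite mulSn in e. lia.
rewrite !mulSn in e. lia.
Qed.

Local Open Scope ring_scope.
Lemma grow_aux (R : realFieldType) (s : nat) (K a b A B C : R) :
  (0 < s)%N -> 0 < K -> 0 <= A -> 0 <= B -> 0 <= C ->
  K * `|a| ^+ (s + s) = A ^+ s * B ^+ s ->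
  K * `|b| ^+ (s + s) = B ^+ s * C ^+ s ->
  `|a| < `|b| -> A < C.
Proof.
move=> s0 K0 A0 B0 C0 ea eb ab.
have h1 : `|a| ^+ (s + s) < `|b| ^+ (s + s).
  by rewrite ltrXn2r // -lt0n addn_gt0 s0.
have h2 : A ^+ s * B ^+ s < B ^+ s * C ^+ s.
  by rewrite -ea -eb ltr_pM2l.
have Bs : 0 < B ^+ s.
  rewrite lt_neqAle exprn_ge0 // andbT; apply/negP => /eqP Bz.
  by move: h2; rewrite -Bz mulr0 mul0r ltxx.
rewrite mulrC ltr_pM2l // in h2.
rewrite ltNge; apply/negP => CA.
have := @lerXn2r R s C A; rewrite !qualifE => /(_ C0 A0 CA).
by rewrite leNgt h2.
Qed.

Lemma sign_aux (R : realFieldType) (s : nat) (K a X Y : R) :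
  odd s -> 0 < K -> a != 0 -> K * a ^+ (s + s) = - (X * Y) ^+ s ->
  X < 0 -> 0 < Y.
Proof.
move=> os K0 a0 e X0.
have h : 0 < K * a ^+ (s + s).
  by rewrite mulr_gt0 // exprn_even_gt0 ?oddD ?addbb // a0 orbT.
rewrite e oppr_gt0 in h.
have XY : X * Y < 0.
  rewrite ltNge; apply/negP => XY; move: h; rewrite ltNge exprn_ge0 //.
rewrite ltNge; apply/negP => Y0.
have : 0 <= X * Y by rewrite mulr_le0 // ltW.
by rewrite leNgt XY.
Qed.

Lemma norm_rel (R : realFieldType) (s : nat) (K a X Y : R) :
  0 < K -> K * a ^+ (s + s) = - (X * Y) ^+ s ->
  K * `|a| ^+ (s + s) = `|X| ^+ s * `|Y| ^+ s.
Proof.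
move=> K0 e.
have := congr1 (fun z => `|z|) e => /=.
by rewrite normrN normrM gtr0_norm // !normrX normrM exprMn.
Qed.

Lemma cyc_core (R : realFieldType) (s : nat) (K : R) (P : nat -> R) :
  (0 < s)%N -> odd s -> 0 < K ->
  (forall j, P j.+1 != 0 ->
     K * P j.+1 ^+ (s + s) = - ((P j + P j.+1) * (P j.+1 + P j.+2)) ^+ s) ->
  forall i, (forall j, `|P j + P j.+1| <= `|P i.+2 + P i.+3|) ->
  P i.+2 + P i.+3 < 0 -> False.
Proof.
move=> s0 os K0 rel i M neg.
have [h|h] := ltP (P i.+3) 0.
  have n3 : P i.+3 != 0 by rewrite lt_eqF.
  have e3 := rel _ n3.
  have pos := sign_aux os K0 n3 e3 neg.
  have n4 : P i.+4 != 0 by apply/negP => /eqP z; move: pos; rewrite z; lra.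
  have e4 := rel _ n4.
  have := grow_aux s0 K0 (normr_ge0 _) (normr_ge0 _) (normr_ge0 _)
     (norm_rel K0 e3) (norm_rel K0 e4).
  rewrite ltr0_norm // gtr0_norm; last by lra.
  move=> /(_ ltac:(lra)).
  by have := M i.+4; lra.
have h2 : P i.+2 < 0 by lra.
have n2 : P i.+2 != 0 by rewrite lt_eqF.
have e2 := rel _ n2.
rewrite [(P i.+1 + _) * _]mulrC in e2.
have pos := sign_aux os K0 n2 e2 neg.
have n1 : P i.+1 != 0 by apply/negP => /eqP z; move: pos; rewrite z; lra.
have e1 := rel _ n1.
rewrite [(P i + _) * _]mulrC in e1.
have := grow_aux s0 K0 (normr_ge0 _) (normr_ge0 _) (normr_ge0 _)
   (norm_rel K0 e2) (norm_rel K0 e1).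
rewrite ltr0_norm // gtr0_norm; last by lra.
move=> /(_ ltac:(lra)).
by have := M i; lra.
Qed.

Lemma per_mod (R : Type) (m : nat) (P : nat -> R) :
  (forall j, P (j + m)%N = P j) -> forall j, P j = P (j %% m)%N.
Proof.
move=> per j; rewrite {1}(divn_eq j m).
elim: (j %/ m)%N => [|q IH]; first by rewrite mul0n add0n.
by rewrite mulSn -addnA addnC per.
Qed.

Lemma cyc_zero (R : realFieldType) (m s : nat) (K : R) (P : nat -> R) :
  (0 < m)%N -> (0 < s)%N -> 0 < K ->
  (forall j, P (j + m)%N = P j) ->
  (forall j, P j.+1 != 0 ->
     K * P j.+1 ^+ (s + s) = - ((P j + P j.+1) * (P j.+1 + P j.+2)) ^+ s) ->
  forall j, P j = 0.
Proof.
move=> m0 s0 K0 per rel.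
have pos : forall a : R, a != 0 -> 0 < K * a ^+ (s + s).
  by move=> a a0; rewrite mulr_gt0 // exprn_even_gt0 ?oddD ?addbb // a0 orbT.
suff H : forall j, P j.+1 = 0.
  case=> [|j]; last exact: H.
  by rewrite -(per 0%N) /= -(prednK m0) H.
case: (boolP (odd s)) => os; last first.
  move=> j; apply/eqP/negP => /negP nz.
  have := pos _ nz; rewrite (rel _ nz) oppr_gt0 ltNge.
  by rewrite exprn_even_ge0.
suff S0 : forall j, P j + P j.+1 = 0.
  move=> j; apply/eqP/negP => /negP nz.
  have := rel _ nz; rewrite S0 mul0r expr0n gtn_eqF // oppr0 => e.
  by have := pos _ nz; rewrite e ltxx.
pose S j := P j + P j.+1.
have perS : forall j, S (j + m)%N = S j.
  by move=> j; rewrite /S /= per -addSn per.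
pose j0 := [arg max_(i > Ordinal m0) `|S i|]%O.
have Mj0 : forall j, `|S j| <= `|S j0|.
  move=> j; rewrite (per_mod perS) /j0.
  case: arg_maxP => //= i0 _ Hi; exact: (Hi (Ordinal (ltn_pmod j m0))).
pose i := (j0 + m.-1 + m.-1)%N.
have ei : S i.+2 = S j0.
  rewrite -[RHS]perS -[RHS]perS; congr S; rewrite /i; lia.
have M : forall j, `|P j + P j.+1| <= `|P i.+2 + P i.+3|.
  by move=> j; have := Mj0 j; rewrite -ei.
have Sj0 : S j0 = 0.
  case: (ltgtP (S j0) 0) => // h; exfalso.
    apply: (cyc_core s0 os K0 rel M); by move: h; rewrite -ei.
  pose Q j := - P j.
  have relQ : forall j, Q j.+1 != 0 ->
     K * Q j.+1 ^+ (s + s) = - ((Q j + Q j.+1) * (Q j.+1 + Q j.+2)) ^+ s.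
    move=> j; rewrite /Q oppr_eq0 => /rel.
    have -> : (- P j.+1) ^+ (s + s) = P j.+1 ^+ (s + s).
      by rewrite exprD -exprMn mulrNN exprMn -exprD.
    move=> ->.
    by rewrite -!opprD mulrNN.
  apply: (cyc_core s0 os K0 relQ (i := i)).
    by move=> j; rewrite /Q -!opprD !normrN.
  by rewrite /Q -opprD oppr_lt0; move: h; rewrite -ei.
move=> j; apply/eqP; rewrite -normr_le0.
by have := Mj0 j; rewrite Sj0 normr0.
Qed.

Lemma piece (R : comPzRingType) (a b : nat) (F : nat -> R) (c d : R) :
  (forall t, (a <= t < b)%N -> c * F t = d) ->
  (\prod_(a <= t < b) F t) * c ^+ (b - a) = d ^+ (b - a).
Proof.
move=> H; rewrite -!prodr_const_nat -big_split /=.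
by apply: eq_big_nat => t ht; rewrite mulrC H.
Qed.

Lemma split_prod (R : pzSemiRingType) (a b c : nat) (F : nat -> R) :
  (a <= b)%N -> (b <= c)%N ->
  \prod_(a <= t < c) F t = (\prod_(a <= t < b) F t) * \prod_(b <= t < c) F t.
Proof. by move=> ab bc; rewrite (@big_cat_nat _ _ _ b a c). Qed.

Lemma rel_alg (R : idomainType) (a A B K : R) (e s' kk : nat) :
  odd e -> kk = (e + (s' + s'))%N -> a != 0 ->
  a ^+ kk * K = (- A) ^+ s' * (- a) ^+ e * (- B) ^+ s' ->
  K * a ^+ (s' + s') = - (A * B) ^+ s'.
Proof.
move=> oe -> a0 H.
have Ne : (- a) ^+ e = - a ^+ e by rewrite exprNn -signr_odd oe expr1 mulN1r.
rewrite Ne exprD in H.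
apply: (mulfI (expf_neq0 e a0)).
transitivity (a ^+ e * a ^+ (s' + s') * K); first by ring.
rewrite H -(mulrNN A B) exprMn; ring.
Qed.


Local Close Scope ring_scope.
Section Comb.
Variables (k s m : nat).
Hypotheses (hs : (0 < s)%N) (hk : (s.*2 < k)%N)
  (hn : (2 * k - s <= scyc_n k s m)%N).

Local Notation n := (scyc_n k s m).
Local Notation p := (k - s)%N.

Lemma p_gt_s : (s < p)%N.
Proof. move: hk; rewrite -addnn; lia. Qed.

Lemma m_gt2 : (2 < m)%N.
Proof.
rewrite ltnNge; apply/negP => h.
have : (m * p <= 2 * p)%N by rewrite leq_mul2r h orbT.
move: hn hk; rewrite /scyc_n -addnn; lia.
Qed.

Lemma m_pos : (0 < m)%N.
Proof. by have := m_gt2; lia. Qed.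

Lemma n_eq : n = (m * p)%N.
Proof. by []. Qed.

Lemma k_lt_n : (k < n)%N.
Proof. move: hn hk; rewrite -addnn; lia. Qed.

Lemma n_pos : (0 < n)%N.
Proof. by have := k_lt_n; lia. Qed.

Definition u (j t : nat) : 'I_n := Ordinal (ltn_pmod (j * p + t + 1) n_pos).
Definition idx (j : nat) : 'I_m := Ordinal (ltn_pmod j m_pos).

Lemma mod_jp j a : ((j %% m) * p + a) %% n = (j * p + a) %% n.
Proof.
by rewrite /scyc_n [in RHS](divn_eq j m) mulnDl -mulnA -addnA modnMDl.
Qed.

Lemma edgeE j : scyc_edge k s m (idx j) = [set u j (val t) | t : 'I_k].
Proof.
apply/setP => v; rewrite inE; apply/existsP/imsetP => [[t /eqP H]|[t _ ->]].
  exists t => //; apply: val_inj; rewrite /= H -addn1 mod_jp addnA //.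
exists t; apply/eqP; rewrite /= mod_jp; congr (_ %% _); lia.
Qed.

Lemma u_inj j : {in [pred t : 'I_k | true] &, injective (fun t : 'I_k => u j t)}.
Proof.
move=> t1 t2 _ _ /(congr1 val) /= /eqP.
rewrite -!addnA eqn_modDl !modn_small; last first.
- by have := k_lt_n; have := ltn_ord t1; lia.
- by have := k_lt_n; have := ltn_ord t2; lia.
move=> /eqP h; apply: val_inj => /=; lia.
Qed.

Lemma u_mod q r : u (q %% m) r = u q r.
Proof. by apply: val_inj; rewrite /= -addnA mod_jp addnA. Qed.

Lemma u_perm q r : u (q + m) r = u q r.
Proof. by rewrite -u_mod modnDr u_mod. Qed.

Lemma u_shift j t : u j (p + t) = u j.+1 t.
Proof. by apply: val_inj; rewrite /= mulSn; congr (_ %% _); lia. Qed.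

Lemma idx_perm q : idx (q + m) = idx q.
Proof. by apply: val_inj; rewrite /= modnDr. Qed.

Lemma val_u q r : val (u q r) = ((q * p + r + 1) %% n)%N.
Proof. by []. Qed.

Lemma qp_lt_n q r : (q < m)%N -> (r < p)%N -> (q * p + r < n)%N.
Proof.
move=> qm rp; have : (q.+1 * p <= m * p)%N by rewrite leq_mul2r qm orbT.
rewrite mulSn /scyc_n mulnC; lia.
Qed.

Lemma mem_key q r (j : 'I_m) : (q < m)%N -> (r < p)%N ->
  (u q r \in scyc_edge k s m j) =
  (j == idx q) || ((r < s)%N && (j == idx (q + m - 1))).
Proof.
move=> qm rp.
have vq : val (idx q) = q by rewrite /= modn_small.
have vq' : val (idx (q + m - 1)) = if q == 0%N then (m - 1)%N else (q - 1)%N.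
  rewrite /=; case: eqP => [->|q0].
    by rewrite add0n modn_small // subn1 prednK ?m_pos.
  have -> : (q + m - 1 = (q - 1) + m)%N by lia.
  by rewrite modnDr modn_small //; lia.
have sp := p_gt_s; have m3 := m_gt2; have kn := k_lt_n.
rewrite inE -!(inj_eq val_inj) vq vq'.
apply/existsP/idP.
- case=> t /eqP H.
  have H1 : ((q * p + r + 1) %% n = (j * p + t + 1) %% n)%N by rewrite -val_u H addn1 addnS.
  move/eqP: H1; rewrite eqn_modDr => /eqP H2.
  rewrite (modn_small (qp_lt_n qm rp)) in H2.
  have tk : (t < p + s)%N by have := ltn_ord t; lia.
  case: (ltnP (j * p + t) n) => hb.
    rewrite modn_small // in H2.
    case: (arith1 sp qm (ltn_ord j) rp tk H2) => [hj|[rs [q0 hj]]].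
      by apply/orP; left; apply/eqP.
    apply/orP; right; rewrite rs /=.
    have -> : (q == 0%N) = false by apply/negbTE; rewrite -lt0n.
    exact/eqP.
  have hb2 : (j * p + t - n < n)%N.
    have : (j.+1 * p <= m * p)%N by rewrite leq_mul2r ltn_ord orbT.
    by rewrite mulSn /scyc_n mulnC; lia.
  rewrite -(subnK hb) modnDr modn_small // in H2.
  have H3 : (q * p + r + m * p = j * p + t)%N.
    by rewrite H2 -/(scyc_n k s m) subnK.
  case: (arith2 sp qm (ltn_ord j) rp tk H3) => [q0 [rs hj]].
  apply/orP; right; rewrite rs q0 /=; exact/eqP.
- move/orP => [/eqP hj | /andP [rs /eqP hj]].
    have rk : (r < k)%N by lia.
    exists (Ordinal rk); apply/eqP; rewrite val_u hj /=; congr (_ %% _); lia.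
  have rk : (p + r < k)%N by lia.
  exists (Ordinal rk); apply/eqP; rewrite val_u /=.
  move: hj; case: eqP => [-> hj | q0 hj].
    rewrite hj mul0n add0n.
    have E : ((m - 1) * p + p = m * p)%N by rewrite addnC -mulSn; congr (_ * _); lia.
    rewrite (_ : ((m - 1) * p + (p + r).+1 = n + (r + 1))%N); last by rewrite /scyc_n; lia.
    by rewrite modnDl.
  have eq : q = j.+1 by move: hj => /= hj; lia.
  by rewrite eq mulSn; congr (_ %% _); lia.
Qed.

Lemma idx_mod q : idx (q %% m) = idx q.
Proof. by apply: val_inj; rewrite /= modn_mod. Qed.

Lemma idx_modm1 q : idx (q %% m + m - 1) = idx (q + m - 1).
Proof.
apply: val_inj; rewrite /=.
have m0 := m_pos.
rewrite -!addnBA //; exact: modnDml.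
Qed.

Lemma mem_gen q r (j : 'I_m) : (r < p)%N ->
  (u q r \in scyc_edge k s m j) =
  (j == idx q) || ((r < s)%N && (j == idx (q + m - 1))).
Proof.
move=> rp; rewrite -u_mod mem_key ?ltn_pmod ?m_pos //.
by rewrite idx_mod idx_modm1.
Qed.

Lemma idx_ne q : idx q != idx (q + m - 1).
Proof.
rewrite -(inj_eq val_inj) /=.
have m0 := m_pos; have m3 := m_gt2.
rewrite -addnBA // -{1}(addn0 q) eq_sym eqn_modDl mod0n modn_small; lia.
Qed.

Lemma surj (v : 'I_n) : exists q r, (r < p)%N /\ v = u q r.
Proof.
have sp := p_gt_s; have n0 := n_pos.
exists ((v + n - 1) %/ p)%N, ((v + n - 1) %% p)%N; split.
  by rewrite ltn_mod; lia.
apply: val_inj; rewrite val_u -divn_eq.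
rewrite subnK; last by lia.
by rewrite modnDr modn_small.
Qed.

Lemma deg_u q r : (r < p)%N ->
  scyc_deg k s m (u q r) = (if (r < s)%N then 2 else 1)%N.
Proof.
move=> rp; rewrite /scyc_deg; case: ifP => rs.
  have -> : [set j | u q r \in scyc_edge k s m j] = [set idx q; idx (q + m - 1)].
    by apply/setP => j; rewrite in_set in_set2 mem_gen // rs.
  by rewrite cards2 idx_ne.
have -> : [set j | u q r \in scyc_edge k s m j] = [set idx q].
  by apply/setP => j; rewrite in_set in_set1 mem_gen // rs orbF.
by rewrite cards1.
Qed.

Lemma deg_block q r : (r < s)%N -> scyc_deg k s m (u q r) = 2%N.
Proof.
move=> rs; have := p_gt_s => sp.
by rewrite deg_u ?rs //; apply: ltn_trans sp.
Qed.

Lemma sum_u (R : zmodType) (F : 'I_m -> R) q r : (r < p)%N ->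
  (\sum_(j | u q r \in scyc_edge k s m j) F j =
  F (idx q) + (if (r < s)%N then F (idx (q + m - 1)%N) else 0))%R.
Proof.
move=> rp; rewrite (bigD1 (idx q)) /=; last by rewrite mem_gen // eqxx.
congr (_ + _)%R; case: ifP => rs.
  apply: big_pred1 => j /=; rewrite mem_gen // rs /=.
  case: (eqVneq j (idx q)) => [->|ne] /=; last by rewrite andbT.
  by apply/esym/negbTE; rewrite idx_ne.
apply: big_pred0 => j /=; rewrite mem_gen // rs orbF.
by case: eqP.
Qed.

Local Open Scope ring_scope.

Section Eig.
Variables (R : realType) (lam : R) (x : 'I_n -> R).
Hypothesis heig : forall i, lam * x i ^+ (k - 1) =
  (scyc_deg k s m i)%:R * x i ^+ (k - 1)
  - \sum_(j : 'I_m | i \in scyc_edge k s m j)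
      \prod_(v in scyc_edge k s m j :\ i) x v.

Definition Pe (j : nat) := \prod_(v in scyc_edge k s m (idx j)) x v.

Lemma prodD1 (A : {set 'I_n}) i : i \in A ->
  \prod_(v in A) x v = x i * \prod_(v in A :\ i) x v.
Proof.
move=> iA; rewrite (bigD1 i) //=; congr (_ * _).
by apply: eq_bigl => v; rewrite in_setD1 andbC.
Qed.

Lemma expk (y : R) : y ^+ k = y * y ^+ (k - 1).
Proof. by rewrite -exprS; congr (_ ^+ _); have := k_lt_n; lia. Qed.

Lemma eq_core q r : (s <= r)%N -> (r < p)%N -> (lam - 1) * x (u q r) ^+ k = - Pe q.
Proof.
move=> sr rp.
have rs : (r < s)%N = false by rewrite ltnNge sr.
rewrite /Pe (@prodD1 _ (u q r)); last by rewrite mem_gen // eqxx.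
have := heig (u q r).
rewrite sum_u // deg_u // rs addr0 expk.
set Y := x (u q r) ^+ (k - 1); set Pi := \prod_(v in _ :\ _) _ => H.
have -> : Pi = Y - lam * Y by rewrite H; ring.
ring.
Qed.

Lemma eq_block q r : (r < s)%N ->
  (lam - 2) * x (u q r) ^+ k = - (Pe q + Pe (q + m - 1)%N).
Proof.
move=> rs; have rp : (r < p)%N by have := p_gt_s; lia.
rewrite /Pe (@prodD1 (scyc_edge k s m (idx q)) (u q r)); last first.
  by rewrite mem_gen // eqxx.
rewrite (@prodD1 (scyc_edge k s m (idx (q + m - 1))) (u q r)); last first.
  by rewrite mem_gen // rs eqxx orbT.
have := heig (u q r).
rewrite sum_u // deg_u // rs expk.
set Y := x (u q r) ^+ (k - 1).
set P1 := \prod_(v in scyc_edge k s m (idx q) :\ _) _.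
set P2 := \prod_(v in scyc_edge k s m (idx (q + m - 1)) :\ _) _ => H.
have E : P1 + P2 = 2%:R * Y - lam * Y by rewrite H; ring.
rewrite -mulrDr E; ring.
Qed.

Lemma Pe_perm j : Pe (j + m)%N = Pe j.
Proof. by rewrite /Pe idx_perm. Qed.

Lemma Pe_prod j : Pe j = \prod_(0 <= t < k) x (u j t).
Proof.
rewrite /Pe edgeE big_imset /=; last exact: u_inj.
by rewrite big_mkord; apply: eq_bigl => t.
Qed.

Lemma relP j :
  Pe j.+1 ^+ k * ((lam - 2) ^+ s * (lam - 1) ^+ (p - s) * (lam - 2) ^+ s) =
  (- (Pe j + Pe j.+1)) ^+ s * (- Pe j.+1) ^+ (p - s) * (- (Pe j.+1 + Pe j.+2)) ^+ s.
Proof.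
have sp := p_gt_s; have kn := k_lt_n.
rewrite [in LHS]Pe_prod -prodrXl (@split_prod _ 0 s k); [|lia|lia].
rewrite (@split_prod _ s p k); [|lia|lia].
have h1 := @piece R 0 s (fun t => x (u j.+1 t) ^+ k) (lam - 2) (- (Pe j + Pe j.+1)).
have h2 := @piece R s p (fun t => x (u j.+1 t) ^+ k) (lam - 1) (- Pe j.+1).
have h3 := @piece R p k (fun t => x (u j.+1 t) ^+ k) (lam - 2) (- (Pe j.+1 + Pe j.+2)).
rewrite subn0 in h1.
have kp : (k - p = s)%N by lia.
rewrite kp in h3.
rewrite -h1; last first.
  move=> t /andP [_ ts]; rewrite eq_block //.
  have -> : (j.+1 + m - 1 = j + m)%N by lia.
  by rewrite Pe_perm addrC.
rewrite -h2; last first.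
  by move=> t /andP [st tp]; rewrite eq_core.
rewrite -h3; last first.
  move=> t /andP [pt tk].
  rewrite -(subnKC pt) u_shift eq_block; last by lia.
  have -> : (j.+2 + m - 1 = j.+1 + m)%N by lia.
  by rewrite Pe_perm addrC.
set A := \prod_(0 <= t < s) _; set B := \prod_(s <= t < p) _.
set C := \prod_(p <= t < k) _; set a := (lam - 2) ^+ s; set b := (lam - 1) ^+ _.
ring.
Qed.

Lemma no_eig : odd k -> 1 < lam -> lam != 2 -> forall v, x v = 0.
Proof.
move=> ok l1 l2.
have sp := p_gt_s; have kn := k_lt_n.
set K := (lam - 2) ^+ s * (lam - 1) ^+ (p - s) * (lam - 2) ^+ s.
have K0 : 0 < K.
  rewrite /K mulrAC -exprD mulr_gt0 //.
    by rewrite exprn_even_gt0 ?oddD ?addbb // subr_eq0 l2 orbT.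
  by rewrite exprn_gt0 // subr_gt0.
have oe : odd (p - s).
  have E : (p - s + (s + s) = k)%N by lia.
  by rewrite -E oddD addnn odd_double addbF in ok.
have Pz : forall j, Pe j = 0.
  apply: (cyc_zero m_pos hs K0 Pe_perm) => j nz.
  apply: (rel_alg oe _ nz (relP j)); lia.
move=> v; have [q [r [rp ->]]] := surj v.
case: (ltnP r s) => rs.
  have := eq_block q rs; rewrite !Pz addr0 oppr0 => /eqP.
  rewrite mulf_eq0 subr_eq0 (negbTE l2) /= expf_eq0 => /andP [_ /eqP //].
have := eq_core q rs rp; rewrite !Pz oppr0 => /eqP.
rewrite mulf_eq0 subr_eq0 gt_eqF //= expf_eq0 => /andP [_ /eqP //].
Qed.

End Eig.

Lemma card_edge (j : 'I_m) : #|scyc_edge k s m j| = k.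
Proof.
have -> : j = idx j by apply: val_inj; rewrite /= modn_small.
rewrite edgeE card_imset ?card_ord //.
by move=> a b; apply: u_inj.
Qed.

Lemma k_gt2 : (2 < k)%N.
Proof. by move: hk hs; rewrite -addnn; lia. Qed.

Lemma eig2 (R : realType) : is_lap_H_eigenvalue R k s m 2.
Proof.
have sp := p_gt_s; have k2 := k_gt2.
pose v0 := u 0%N 0%N.
pose x0 := fun v : 'I_n => if v == v0 then (1 : R) else 0.
have Z : forall (j : 'I_m) i, \prod_(v in scyc_edge k s m j :\ i) x0 v = 0.
  move=> j i.
  have : (0 < #|(scyc_edge k s m j :\ i) :\ v0|)%N.
    have := cardsD1 v0 (scyc_edge k s m j :\ i).
    have := cardsD1 i (scyc_edge k s m j).
    rewrite card_edge.
    have := leq_b1 (i \in scyc_edge k s m j); have := leq_b1 (v0 \in scyc_edge k s m j :\ i); move: (v0 \in _) (i \in _) (#|_ :\ i :\ v0|) (#|scyc_edge k s m j :\ i|) => [] [] a b; lia.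
  case/card_gt0P => v; rewrite in_setD1 => /andP [nv vin].
  rewrite (bigD1 v) //= /x0 (negbTE nv) mul0r //.
exists x0; split.
  by exists v0; rewrite /x0 eqxx oner_neq0.
move=> i; rewrite big1; last by move=> j _; apply: Z.
rewrite subr0 /x0; case: eqP => [->|_].
  by rewrite deg_block // expr1n.
by rewrite expr0n /= (_ : (k - 1 == 0)%N = false) ?mulr0 //; lia.
Qed.

Lemma maxdeg : scyc_maxdeg k s m = 2%N.
Proof.
have sp := p_gt_s.
apply/eqP; rewrite eqn_leq; apply/andP; split.
  apply/bigmax_leqP => i _; have [q [r [rp ->]]] := surj i.
  by rewrite deg_u //; case: ifP.
have := @leq_bigmax _ (fun i => scyc_deg k s m i) (u 0%N 0%N).
by rewrite deg_block.
Qed.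

End Comb.

Local Open Scope ring_scope.

Theorem proposition7p1 (R : realType) (k s m : nat) :
  odd k -> (1 <= s)%N -> (s.*2 < k)%N -> (2 * k - s <= scyc_n k s m)%N ->
  (* lambda(L) = 2: 2 is a Laplacian H-eigenvalue and it is the largest one *)
  [/\ is_lap_H_eigenvalue R k s m 2,
      (forall lambda : R, is_lap_H_eigenvalue R k s m lambda -> lambda <= 2),
      scyc_maxdeg k s m = 2%N
    & (~~ odd s ->
       forall lambda : R, is_lap_H_eigenvalue R k s m lambda -> 1 < lambda ->
         lambda = 2)].
Proof.
move=> ok hs hk hn.
have noe : forall lam : R, is_lap_H_eigenvalue R k s m lam -> 1 < lam -> lam != 2 -> False.
  move=> lam [x [[i nz] heig]] l1 l2.
  by have := no_eig hs hk hn heig ok l1 l2 i; move/eqP: nz.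
split.
- exact: eig2.
- move=> lam he; rewrite leNgt; apply/negP => l2.
  apply: (noe _ he); first by apply: lt_trans l2; rewrite ltr1n.
  by rewrite gt_eqF.
- exact: maxdeg.
- move=> _ lam he l1; case: (eqVneq lam 2) => // ne; exfalso; exact: noe he l1 ne.
Qed.
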